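(* Let $A$ be a finite alphabet, $M$ a finite monoid, $\alpha: A^*\to M$ a monoid morphism, $S=\alpha(A^+)$, and let $B$, $\beta$ and well-formed words be as defined in the context. There exists a map $\eta: A^* \to B^*$ such that: (1) for every $w \in A^*$, $\eta(w)$ is well-formed and $\alpha(w) = \beta(\eta(w))$; (2) for every language $K \subseteq B^*$ definable in $\mathrm{FO}^2(<)$, the language $\eta^{-1}(K) \subseteq A^*$ is definable in $\mathrm{FO}^2(<,+1)$.
   Context: $E(S)$ denotes the set of idempotents of $S$, and $\square$ is a fresh symbol not in $M$. The alphabet $B$ is $\{(e,s,f) \mid e,f \in E(S)\cup\{\square\},\ s \in M\}$. The monoid morphism $\beta: B^* \to M$ is defined on letters by $\beta((e,s,f)) = esf$, $\beta((\square,s,f)) = sf$, $\beta((e,s,\square)) = es$ and $\beta((\square,s,\square)) = s$ for $e,f\in E(S)$, $s \in M$. A word $u = (e_0,s_0,f_0)\cdots(e_n,s_n,f_n) \in B^*$ is well-formed if it is nonempty, $e_0 = f_n = \square$, and for all $i < n$, $f_i = e_{i+1} \in E(S)$. Words are logical structures whose domain is the set of positions, with unary letter predicates $P_a$, the order $<$ and the successor $+1$; $\mathrm{FO}^2(<)$ (resp. $\mathrm{FO}^2(<,+1)$) is the set of first-order formulas using the letter predicates and $<$ (resp. $<$ and $+1$) with only two reusable variable names; a language is definable if it is the set of words satisfying such a sentence. The map $\eta$ need not be a morphism. *)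

(* Defs.v *)
From mathcomp Require Import all_boot.
Set Implicit Arguments. Unset Strict Implicit. Unset Printing Implicit Defensive.

(* The two reusable variable names x (false) and y (true). *)
Definition var := bool.

Inductive fo2 (L : Type) : Type :=
  | FTrue
  | FLetter (a : L) (x : var)
  | FEq (x y : var)
  | FLt (x y : var)
  | FSucc (x y : var)
  | FNot (phi : fo2 L)
  | FAnd (phi psi : fo2 L)
  | FExists (x : var) (phi : fo2 L).

Arguments FTrue {L}.

Definition upd (v : var -> nat) (x : var) (i : nat) : var -> nat :=
  fun z => if z == x then i else v z.

Fixpoint sat (L : Type) (w : seq L) (v : var -> nat) (phi : fo2 L) : Prop :=
  match phi with
  | FTrue => True
  | FLetter a x => onth w (v x) = Some a
  | FEq x y => v x = v y
  | FLt x y => v x < v y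
  | FSucc x y => v y = (v x).+1
  | FNot p => ~ sat w v p
  | FAnd p q => sat w v p /\ sat w v q
  | FExists x p => exists i, i < size w /\ sat w (upd v x i) p
  end.

Fixpoint fv (L : Type) (phi : fo2 L) : seq var :=
  match phi with
  | FTrue => [::]
  | FLetter _ x => [:: x]
  | FEq x y | FLt x y | FSucc x y => [:: x; y]
  | FNot p => fv p
  | FAnd p q => fv p ++ fv q
  | FExists x p => filter (fun z => z != x) (fv p)
  end.

Definition sentence (L : Type) (phi : fo2 L) : Prop := fv phi = [::].

Fixpoint succ_free (L : Type) (phi : fo2 L) : Prop :=
  match phi with
  | FSucc _ _ => False
  | FNot p => succ_free p
  | FAnd p q => succ_free p /\ succ_free q
  | FExists _ p => succ_free p
  | _ => True
  end.

(* the language of a sentence (the valuation is irrelevant for sentences) *)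
Definition lang (L : Type) (phi : fo2 L) : seq L -> Prop :=
  fun w => sat w (fun _ => 0) phi.

Definition FO2_lt_definable (L : Type) (K : seq L -> Prop) : Prop :=
  exists phi : fo2 L, sentence phi /\ succ_free phi /\ forall w, K w <-> lang phi w.

Definition FO2_lt_succ_definable (L : Type) (K : seq L -> Prop) : Prop :=
  exists phi : fo2 L, sentence phi /\ forall w, K w <-> lang phi w.

Section Alphabet.
Variables (A M : finType) (mul : M -> M -> M) (one : M) (alpha : seq A -> M).

Definition inS (s : M) : Prop := exists w : seq A, w <> [::] /\ alpha w = s.

Definition inES (e : M) : Prop := inS e /\ mul e e = e.

(* letters (e,s,f); None stands for the fresh symbol \square *)
Definition Bvalid (x : option M * M * option M) : Prop :=
  (forall e, x.1.1 = Some e -> inES e) /\ (forall f, x.2 = Some f -> inES f).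

Definition Bty : Type := {x : option M * M * option M | Bvalid x}.

Definition beta_letter (b : Bty) : M :=
  match proj1_sig b with
  | (Some e, s, Some f) => mul (mul e s) f
  | (None, s, Some f) => mul s f
  | (Some e, s, None) => mul e s
  | (None, s, None) => s
  end.

Definition beta (u : seq Bty) : M := foldr (fun b m => mul (beta_letter b) m) one u.

Definition bdef : option M * M * option M := (None, one, None).

Definition well_formed (u : seq Bty) : Prop :=
  let t := map (@proj1_sig _ _) u in
  u <> [::] /\
  (nth bdef t 0).1.1 = None /\
  (nth bdef t (size t).-1).2 = None /\
  forall i, i.+1 < size t ->
    exists e, (nth bdef t i).2 = Some e /\ (nth bdef t i.+1).1.1 = Some e /\ inES e.

End Alphabet.

(* Main.v *)
Require Import Defs.
From mathcomp Require Import all_boot zify.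
From Stdlib Require Import ClassicalEpsilon.
Set Implicit Arguments. Unset Strict Implicit. Unset Printing Implicit Defensive.

Definition pb (P : Prop) : bool := if excluded_middle_informative P then true else false.
Lemma pbE (P : Prop) : pb P <-> P.
Proof. rewrite /pb; case: excluded_middle_informative => //. Qed.

Section Main.
Variables (A M : finType) (mul : M -> M -> M) (one : M).
Hypotheses (mulA : associative mul) (mul1m : left_id one mul) (mulm1 : right_id one mul).
Variable alpha : seq A -> M.
Hypothesis alpha_nil : alpha [::] = one.
Hypothesis alpha_cat : forall u v, alpha (u ++ v) = mul (alpha u) (alpha v).

Definition pw (t : M) n := iter n (mul t) one.

Lemma pwD t m n : pw t (m + n) = mul (pw t m) (pw t n).
Proof. elim: m => [|m IH] /=; first by rewrite mul1m. by rewrite /pw /= -/(pw t _) IH mulA. Qed.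

Definition KK := #|M|.+1.

Lemma pigeon (f : 'I_KK -> M) : exists i j : 'I_KK, i < j /\ f i = f j.
Proof.
case: (pickP (fun p : 'I_KK * 'I_KK => (p.1 < p.2) && (f p.1 == f p.2))).
  by move=> [i j] /andP[H1 /eqP H2]; exists i, j.
move=> H; have inj : injective f.
  move=> x y Hxy; case: (ltngtP x y) => Hc.
  - by have := H (x, y); rewrite /= Hc Hxy eqxx.
  - by have := H (y, x); rewrite /= Hc Hxy eqxx.
  - exact: val_inj.
by have := leq_card f inj; rewrite card_ord ltnn.
Qed.

Lemma idem_pow t : exists N, 0 < N /\ mul (pw t N) (pw t N) = pw t N.
Proof.
have [i [j [Hij Heq]]] := pigeon (fun k => pw t (nat_of_ord k).+1).
set a := (nat_of_ord i).+1. set p := (j - i).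
have Hp : 0 < p by rewrite /p subn_gt0.
have Hap : a + p = (nat_of_ord j).+1 by rewrite /a /p; lia.
have step : forall c, pw t (a + c + p) = pw t (a + c).
  by move=> c; rewrite -addnA (addnC c) addnA pwD Hap -Heq -pwD.
have per : forall c q, pw t (a + c + q * p) = pw t (a + c).
  move=> c; elim=> [|q IH]; first by rewrite mul0n addn0.
  have -> : a + c + q.+1 * p = a + (c + q * p) + p by lia.
  by rewrite step addnA IH.
exists (a * p); split; first by rewrite muln_gt0.
have Ha : a <= a * p by rewrite leq_pmulr.
rewrite -pwD.
have -> : a * p + a * p = a + (a * p - a) + a * p by lia.
rewrite per; congr pw; lia.
Qed.

Lemma stab_pow x t : mul x t = x -> forall n, mul x (pw t n) = x.
Proof. move=> H; elim=> [|n IH] /=; first by rewrite mulm1. by rewrite /pw /= -/(pw t n) mulA H. Qed.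

Lemma alpha_pow v n : alpha (flatten (nseq n v)) = pw (alpha v) n.
Proof. elim: n => [|n IH] /=; first by rewrite alpha_nil. by rewrite alpha_cat IH. Qed.

Local Notation inES := (inES mul alpha).
Local Notation inS := (inS alpha).

Lemma stab_exists x t : inS t -> mul x t = x -> exists e, inES e /\ mul x e = x.
Proof.
move=> [v [Hv Ht]] Hx; have [N [HN HI]] := idem_pow t.
exists (pw t N); split; last exact: stab_pow.
split=> //; exists (flatten (nseq N v)); split; last by rewrite alpha_pow Ht.
by case: (N) HN => // N0 _ /=; case: v Hv {Ht}.
Qed.

Definition stabb x := pb (exists e, inES e /\ mul x e = x).
Definition stabE x := epsilon (inhabits one) (fun e => inES e /\ mul x e = x).
Lemma stabEP x : stabb x -> inES (stabE x) /\ mul x (stabE x) = x.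
Proof. by move=> /pbE H; apply: (epsilon_spec (inhabits one) (fun e => inES e /\ mul x e = x)). Qed.

Definition sub (w : seq A) a b := take (b - a) (drop a w).
Definition rr := KK.+1.
Definition Dj (w : seq A) j := minn j.-1 (size w - KK).
Definition Pm w d m := has (fun l => stabb (alpha (sub w (d + l) (d + m.+1)))) (iota 0 m.+1).
Definition qoff w d := find (Pm w d) (iota 0 KK).
Definition loff w d :=
  find (fun l => stabb (alpha (sub w (d + l) (d + (qoff w d).+1)))) (iota 0 (qoff w d).+1).
Definition qq w j := Dj w j + (qoff w (Dj w j)).+1.
Definition xx w j := alpha (sub w (Dj w j + loff w (Dj w j)) (qq w j)).
Definition ee w j := stabE (xx w j).

Lemma sub_cat w a b c : a <= b -> b <= c -> sub w a c = sub w a b ++ sub w b c.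
Proof.
move=> Hab Hbc; rewrite /sub.
have -> : c - a = (b - a) + (c - b) by lia.
by rewrite takeD drop_drop; congr (_ ++ take _ (drop _ _)); lia.
Qed.

Lemma sub_full w : sub w 0 (size w) = w.
Proof. by rewrite /sub drop0 subn0 take_size. Qed.

Lemma size_sub w a b : size (sub w a b) = minn (b - a) (size w - a).
Proof. by rewrite /sub size_take_min size_drop. Qed.

Lemma nth_sub x0 w a b t : t < b - a -> nth x0 (sub w a b) t = nth x0 w (a + t).
Proof. by move=> H; rewrite /sub nth_take // nth_drop. Qed.

Lemma sub_sub w o e a b : a <= b -> o + b <= e ->
  sub (sub w o e) a b = sub w (o + a) (o + b).
Proof.
move=> Hab Hb; rewrite /sub.
have -> : e - o = (e - o - a) + a by lia.
rewrite -take_drop drop_drop -take_min; congr (take _ (drop _ _)); lia.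
Qed.

Lemma KK_gt1 : 1 < KK.
Proof. by rewrite /KK ltnS; apply/card_gt0P; exists one. Qed.

Section Long.
Variable w : seq A.
Hypothesis Hlong : KK <= size w.

Lemma Pm_exists D : D + KK <= size w -> has (Pm w D) (iota 0 KK).
Proof.
move=> HD.
have [i [j [Hij Heq]]] := pigeon (fun k => alpha (sub w D (D + (nat_of_ord k).+1))).
have Hj := ltn_ord j.
have Hsplit : sub w D (D + j.+1) = sub w D (D + i.+1) ++ sub w (D + i.+1) (D + j.+1).
  by apply: sub_cat; lia.
have Hst : stabb (alpha (sub w D (D + i.+1))).
  apply/pbE; apply: (@stab_exists _ (alpha (sub w (D + i.+1) (D + j.+1)))).
    exists (sub w (D + i.+1) (D + j.+1)); split=> //.
    move=> H0; have := size_sub w (D + i.+1) (D + j.+1); rewrite H0 /=; lia.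
  by rewrite -alpha_cat -Hsplit -Heq.
apply/hasP; exists (nat_of_ord i); first by rewrite mem_iota /= add0n; lia.
apply/hasP; exists 0; first by rewrite mem_iota.
by rewrite addn0.
Qed.

Variable j : nat.
Hypotheses (Hj0 : 0 < j) (Hjn : j < size w).

Lemma Dj_bound : Dj w j + KK <= size w.
Proof. rewrite /Dj; have := KK_gt1; lia. Qed.

Lemma qoff_lt : qoff w (Dj w j) < KK.
Proof. by have := Pm_exists Dj_bound; rewrite has_find size_iota. Qed.

Lemma qoff_P : Pm w (Dj w j) (qoff w (Dj w j)).
Proof.
have := nth_find 0 (Pm_exists Dj_bound); rewrite -/(qoff w _) nth_iota //.
exact: qoff_lt.
Qed.

Lemma loff_P : loff w (Dj w j) <= qoff w (Dj w j) /\
  stabb (alpha (sub w (Dj w j + loff w (Dj w j)) (Dj w j + (qoff w (Dj w j)).+1))).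
Proof.
have H := qoff_P; have Hf := H; rewrite /Pm has_find size_iota in Hf.
split; first by rewrite /loff -ltnS.
have := nth_find 0 H; rewrite -/(loff w _) nth_iota //.
Qed.

Lemma ee_spec : inES (ee w j) /\ mul (xx w j) (ee w j) = xx w j.
Proof. by apply: stabEP; have [_ H] := loff_P; rewrite /xx /qq. Qed.

Lemma qq_le : qq w j <= size w.
Proof. have := Dj_bound; have := qoff_lt; rewrite /qq; lia. Qed.

Lemma pref_stab : mul (alpha (sub w 0 (qq w j))) (ee w j) = alpha (sub w 0 (qq w j)).
Proof.
have [Hl _] := loff_P.
rewrite (@sub_cat w 0 (Dj w j + loff w (Dj w j))); try (rewrite /qq; lia).
by rewrite alpha_cat -mulA -/(xx w j) (proj2 ee_spec).
Qed.

End Long.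

Lemma qq_mono w j : 0 < j -> j.+1 < size w -> KK <= size w -> qq w j <= qq w j.+1.
Proof.
move=> Hj0 Hjn Hl.
set D := Dj w j; set D' := Dj w j.+1.
have HDD : D <= D' by rewrite /D /D' /Dj; lia.
have HD'q : Pm w D' (qoff w D') by apply: qoff_P.
rewrite /qq -/D -/D'; rewrite leqNgt; apply/negP => Hlt.
set m := D' + qoff w D' - D.
have Hm : m < qoff w D by rewrite /m; lia.
have := before_find 0 Hm; rewrite -/(qoff w D) nth_iota; last first.
  have := @qoff_lt w Hl j Hj0 (ltnW Hjn); rewrite -/D => H1; move: Hm H1; clear; lia.
rewrite add0n /Pm; move/negP; apply.
move: HD'q; rewrite /Pm => /hasP [l Hl1 Hl2].
apply/hasP; exists (D' - D + l).
  rewrite mem_iota in Hl1; rewrite mem_iota /m; move: HDD Hl1; clear; lia.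
have -> : D + (D' - D + l) = D' + l by move: HDD; clear; lia.
have -> : D + m.+1 = D' + (qoff w D').+1 by rewrite /m; move: HDD; clear; lia.
exact: Hl2.
Qed.

Local Notation B := (Bty mul alpha).
Local Notation Bvalid := (Bvalid mul alpha).

Lemma bdef_valid : Bvalid (None, one, None).
Proof. by split. Qed.

Definition mkB (x : option M * M * option M) : B :=
  match excluded_middle_informative (Bvalid x) with
  | left h => exist _ x h
  | right _ => exist _ (None, one, None) bdef_valid end.

Lemma mkB_val x : Bvalid x -> proj1_sig (mkB x) = x.
Proof. by rewrite /mkB; case: excluded_middle_informative. Qed.

Definition val3 (x : option M * M * option M) : M :=
  match x with
  | (Some e, s, Some f) => mul (mul e s) f
  | (None, s, Some f) => mul s f
  | (Some e, s, None) => mul e s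
  | (None, s, None) => s
  end.

Lemma bl_mkB x : Bvalid x -> beta_letter (mkB x) = val3 x.
Proof. by move=> H; rewrite /beta_letter mkB_val. Qed.

Lemma beta_rcons (u : seq B) b : beta one (rcons u b) = mul (beta one u) (beta_letter b).
Proof.
elim: u => [|c u IH] /=; first by rewrite mulm1 mul1m.
by rewrite IH mulA.
Qed.

Definition letterT w i : option M * M * option M :=
  (if i == 0 then None else Some (ee w i),
   alpha (sub w (if i == 0 then 0 else qq w i) (if i.+1 == size w then size w else qq w i.+1)),
   if i.+1 == size w then None else Some (ee w i.+1)).
Definition letterB w i := mkB (letterT w i).
Definition eta w : seq B :=
  if KK <= size w then map (letterB w) (iota 0 (size w)) else [:: mkB (None, alpha w, None)].

Lemma letterT_valid w i : KK <= size w -> i < size w -> Bvalid (letterT w i).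
Proof.
move=> Hl Hi; split=> e /=.
  case: eqP => // Hi0 [<-]; apply: (proj1 (@ee_spec w Hl i _ Hi)); lia.
case: eqP => // Hi0 [<-]; apply: (proj1 (@ee_spec w Hl i.+1 _ _)); lia.
Qed.

Lemma beta_prefix w m : KK <= size w -> 0 < m -> m < size w ->
  beta one (map (letterB w) (iota 0 m)) = alpha (sub w 0 (qq w m)).
Proof.
move=> Hl; elim: m => [//|m IH] _ Hm.
rewrite -addn1 iotaD map_cat /= cats1 beta_rcons add0n /letterB bl_mkB; last first.
  by apply: letterT_valid; lia.
case: (posnP m) => [->|Hm0].
  rewrite /letterT /=.
  have -> : (1 == size w) = false by apply/negP => /eqP; lia.
  by rewrite /= mul1m (@pref_stab w Hl 1) //; lia.
rewrite IH //; last lia.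
rewrite /letterT.
have -> : (m.+1 == size w) = false by apply/negP => /eqP; lia.
have -> : (m == 0) = false by lia.
rewrite /= !mulA (@pref_stab w Hl m) //; last lia.
rewrite -alpha_cat -sub_cat //; last (apply: qq_mono; lia).
by rewrite addn1 (@pref_stab w Hl m.+1).
Qed.

Lemma beta_eta w : beta one (eta w) = alpha w.
Proof.
rewrite /eta; case: ifP => Hl; last by rewrite /= /beta_letter mkB_val //= mulm1.
have Hn := KK_gt1.
have -> : size w = (size w).-1 + 1 by lia.
rewrite iotaD map_cat /= cats1 beta_rcons add0n /letterB bl_mkB; last first.
  by apply: letterT_valid; lia.
rewrite beta_prefix //; try lia.
rewrite /letterT.
have -> : ((size w).-1 == 0) = false by lia.
have -> : (size w).-1.+1 = size w by lia.
rewrite eqxx /= mulA (@pref_stab w Hl) //; try lia.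
rewrite -alpha_cat -sub_cat ?sub_full //.
have := @qq_le w Hl (size w).-1; lia.
Qed.

Lemma wf_eta w : well_formed one (eta w).
Proof.
rewrite /eta; case: ifP => Hl; last first.
  by rewrite /well_formed /= mkB_val //; split.
have Hn := KK_gt1.
have Ht : map (@proj1_sig _ _) (map (letterB w) (iota 0 (size w))) = map (letterT w) (iota 0 (size w)).
  rewrite -map_comp; apply/eq_in_map => i; rewrite mem_iota => /andP[_ Hi] /=.
  by rewrite /letterB mkB_val //; apply: letterT_valid.
rewrite /well_formed Ht size_map size_iota.
have Hnth : forall i, i < size w -> nth (bdef one) (map (letterT w) (iota 0 (size w))) i = letterT w i.
  by move=> i Hi; rewrite (nth_map 0) ?size_iota // nth_iota.
split; first by case: (size w) Hl Hn => //=; lia.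
split; first by rewrite Hnth //; lia.
split; first by rewrite Hnth /letterT /=; [rewrite prednK ?eqxx //|]; lia.
move=> i Hi; rewrite !Hnth //; try lia.
exists (ee w i.+1); rewrite /letterT /=.
have -> : (i.+1 == size w) = false by lia.
split=> //; split=> //; apply: (proj1 (@ee_spec w Hl i.+1 _ _)); lia.
Qed.

Section Shift.
Variables (w : seq A) (o e D : nat).
Hypotheses (HoD : o <= D) (HDe : D + KK <= e).
Let lw := sub w o e.

Lemma Pm_shift m : m < KK -> Pm lw (D - o) m = Pm w D m.
Proof.
move=> Hm; apply: eq_in_has => l; rewrite mem_iota => /andP[_ Hl] /=.
rewrite /lw sub_sub; try lia.
by congr (stabb (alpha (sub w _ _))); lia.
Qed.

Lemma qoff_shift : qoff lw (D - o) = qoff w D.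
Proof.
apply: eq_in_find => m; rewrite mem_iota => /andP[_ Hm] /=; apply: Pm_shift; lia.
Qed.

Lemma loff_shift : qoff w D < KK -> loff lw (D - o) = loff w D.
Proof.
move=> Hq; rewrite /loff qoff_shift; apply: eq_in_find => l; rewrite mem_iota => /andP[_ Hl] /=.
rewrite /lw sub_sub; try lia.
by congr (stabb (alpha (sub w _ _))); lia.
Qed.
End Shift.

Definition pp i := minn i rr.
Definition oo i := i - pp i.
Definition en (w : seq A) i := minn (size w) (i + rr + 1).
Definition lwin w i := sub w (oo i) (en w i).

Lemma size_lwin w i : size (lwin w i) = en w i - oo i.
Proof. rewrite /lwin size_sub /en /oo /pp; lia. Qed.

Section Loc.
Variables (w : seq A) (i : nat).
Hypotheses (Hl : KK <= size w) (Hi : i < size w).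
Let lw := lwin w i.
Let o := oo i.

Lemma Dj_shift j : 0 < j < size w -> i <= j <= i.+1 ->
  [/\ o <= Dj w j, Dj w j + KK <= en w i & Dj lw (j - o) = Dj w j - o].
Proof.
move=> /andP[Hj0 Hjn] /andP[Hij Hji].
have Hs := size_lwin w i.
rewrite /Dj -/lw Hs /o /oo /en /pp /rr.
have := KK_gt1; split; lia.
Qed.

Lemma qq_shift j : 0 < j < size w -> i <= j <= i.+1 ->
  qq lw (j - o) = qq w j - o /\ ee lw (j - o) = ee w j /\ o <= qq w j <= en w i.
Proof.
move=> Hj Hij; have [H1 H2 H3] := Dj_shift Hj Hij.
have Hq : qoff w (Dj w j) < KK by apply: qoff_lt; lia.
have Hlo := proj1 (@loff_P w Hl j ltac:(lia) ltac:(lia)).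
have Q1 : qq lw (j - o) = qq w j - o.
  by rewrite /qq H3 /lw /lwin -/o (qoff_shift w H1 H2); lia.
split=> //; split; last by rewrite /qq; lia.
rewrite /ee /xx Q1 H3 /lw /lwin -/o (loff_shift H1 H2 Hq) sub_sub; try (rewrite /qq; lia).
by congr (stabE (alpha (sub w _ _))); rewrite /qq; lia.
Qed.

Lemma letter_shift : letterT w i = letterT lw (pp i).
Proof.
have Hs := size_lwin w i.
have Hpo : pp i = i - o by rewrite /o /oo /pp; lia.
have E0 : (pp i == 0) = (i == 0) by rewrite /pp /rr; lia.
have E1 : (pp i).+1 == size lw = (i.+1 == size w).
  by rewrite /lw Hs /oo /en /pp /rr; lia.
rewrite /letterT E0 E1.
case: (posnP i) => [Hi0|Hi0].
  rewrite Hi0 /=.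
  case: eqP => Hn.
    by have := KK_gt1; lia.
  have [Q1 [Q2 Q3]] := @qq_shift 1 ltac:(lia) ltac:(lia).
  have Ho : o = 0 by rewrite /o /oo /pp Hi0.
  rewrite Ho subn0 in Q1 Q2 Q3.
  have -> : (pp 0).+1 = 1 by [].
  rewrite Q1 Q2 /lw /lwin -/o Ho sub_sub ?add0n //; rewrite ?subn0 //; lia.
have [Q1 [Q2 Q3]] := @qq_shift i ltac:(lia) ltac:(lia).
rewrite Hpo -Q2.
case: eqP => Hn.
  rewrite Q1 Hs /lw /lwin -/o sub_sub; try (rewrite /o /oo /pp /en in Q3 *; lia).
  by congr (_, alpha (sub w _ _), _); rewrite /o /oo /pp /en in Q3 *; lia.
have [R1 [R2 R3]] := @qq_shift i.+1 ltac:(lia) ltac:(lia).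
have -> : (i - o).+1 = i.+1 - o by rewrite /o /oo /pp; lia.
rewrite R1 R2 Q1 /lw /lwin -/o sub_sub; try lia.
  by congr (_, alpha (sub w _ _), _); lia.
have := @qq_mono w i Hi0 ltac:(lia) Hl; lia.
Qed.
End Loc.

Lemma onth_take (T : Type) m (s : seq T) t : onth (take m s) t = if t < m then onth s t else None.
Proof.
elim: s m t => [|x s IH] m t; first by rewrite /= !onth0n; case: ifP.
case: m => [|m]; first by rewrite /= onth0n.
by case: t => [|t] //=; rewrite IH.
Qed.

Lemma onth_drop (T : Type) a (s : seq T) t : onth (drop a s) t = onth s (a + t).
Proof. elim: a s => [|a IH] [|x s] //=; by rewrite ?onth0n. Qed.

Lemma onth_sub w a b t : onth (sub w a b) t = if t < b - a then onth w (a + t) else None.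
Proof. by rewrite /sub onth_take onth_drop. Qed.

Lemma onth_iota m n k : onth (iota m n) k = if k < n then Some (m + k) else None.
Proof.
elim: n m k => [|n IH] m [|k] //=; first by rewrite addn0.
by rewrite IH ltnS addSnnS.
Qed.

Definition VV (w : seq A) i : seq (option A) :=
  [seq (if rr <= i + k then onth w (i + k - rr) else None) | k <- iota 0 (rr + rr + 1)].

Lemma size_VV w i : size (VV w i) = rr + rr + 1.
Proof. by rewrite size_map size_iota. Qed.

Lemma nth_VV w i k : k < rr + rr + 1 ->
  nth None (VV w i) k = (if rr <= i + k then onth w (i + k - rr) else None).
Proof. by move=> Hk; rewrite (nth_map 0) ?size_iota // nth_iota. Qed.

Lemma VV_decomp w i : i < size w ->
  VV w i = nseq (rr - pp i) None ++ map Some (lwin w i) ++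
           nseq (rr + rr + 1 - (rr - pp i) - size (lwin w i)) None.
Proof.
move=> Hi; have Hs := size_lwin w i.
apply: eq_from_onth => k.
rewrite /VV onth_map onth_iota !onth_cat size_nseq size_map !onth_nseq onth_map /lwin onth_sub.
rewrite /lwin in Hs; rewrite Hs.
have Hp : pp i <= rr by rewrite /pp; lia.
have HL : en w i - oo i <= rr + 1 + pp i by rewrite /en /oo /pp; lia.
have HL0 : 0 < en w i - oo i by rewrite /en /oo /pp; lia.
case: (ltnP k (rr + rr + 1)) => Hk /=; last first.
  rewrite ifF; last lia. rewrite ifF; last lia. by rewrite ifF //; lia.
rewrite add0n.
case: (ltnP k (rr - pp i)) => H1.
  by rewrite ifF //; rewrite /pp in H1 *; lia.
rewrite ifT; last by rewrite /pp in H1 *; lia.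
case: (ltnP (k - (rr - pp i)) (en w i - oo i)) => H2.
  have -> : oo i + (k - (rr - pp i)) = i + k - rr by rewrite /oo /pp in H1 H2 *; lia.
  case E: (onth w (i + k - rr)) => [x|] //.
  have := onthNE w (i + k - rr); rewrite E /= => /esym.
  rewrite /oo /en /pp in H1 H2 *; lia.
rewrite ifT; last lia.
rewrite onth_default //.
rewrite /en /oo /pp in H1 H2 HL *; lia.
Qed.

Definition FF (c : seq (option A)) : B :=
  letterB (pmap id c) (rr - find (fun o : option A => o != None) c).

Lemma pmap_nseqN n : pmap id (nseq n (@None A)) = [::].
Proof. by elim: n. Qed.
Lemma pmap_mapS (s : seq A) : pmap id (map Some s) = s.
Proof. by elim: s => //= x s ->. Qed.
Lemma has_nseqN n : has (fun o : option A => o != None) (nseq n None) = false.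
Proof. by elim: n. Qed.

Lemma FF_VV w i : KK <= size w -> i < size w -> FF (VV w i) = letterB w i.
Proof.
move=> Hl Hi; rewrite /FF VV_decomp // !pmap_cat !pmap_nseqN pmap_mapS cats0 /=.
rewrite find_cat has_nseqN size_nseq find_cat.
have Hs := size_lwin w i.
case E: (lwin w i) Hs => [|x s] Hs.
  by move: Hs => /=; rewrite /en /oo /pp; lia.
rewrite /= addn0.
have -> : rr - (rr - pp i) = pp i by rewrite /pp; lia.
by rewrite /letterB -E -letter_shift.
Qed.

Lemma size_eta w : KK <= size w -> size (eta w) = size w.
Proof. by move=> Hl; rewrite /eta Hl size_map size_iota. Qed.

Lemma onth_eta w i b : KK <= size w ->
  onth (eta w) i = Some b <-> i < size w /\ FF (VV w i) = b.
Proof.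
move=> Hl; rewrite /eta Hl onth_map onth_iota.
case: ltnP => Hi /=; last by split=> // [[]]; lia.
by rewrite add0n FF_VV //; split=> [[]|[_ ->]].
Qed.

Local Notation fo := (fo2 A).

Fixpoint Fw (z : var) (d : nat) (P : var -> fo) : fo :=
  if d is d'.+1 then FExists (~~ z) (FAnd (FSucc A z (~~ z)) (Fw (~~ z) d' P)) else P z.
Fixpoint Bk (z : var) (d : nat) (P : var -> fo) : fo :=
  if d is d'.+1 then FExists (~~ z) (FAnd (FSucc A (~~ z) z) (Bk (~~ z) d' P)) else P z.

Lemma upd_same (v : var -> nat) x i : upd v x i x = i.
Proof. by rewrite /upd eqxx. Qed.
Lemma upd_other (v : var -> nat) x i : upd v (~~ x) i x = v x.
Proof. by rewrite /upd; case: x. Qed.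

Section Spec.
Variables (w : seq A) (P : var -> fo) (Q : nat -> Prop).
Hypothesis HP : forall v y, sat w v (P y) <-> Q (v y).

Lemma Fw_spec d : forall v z, sat w v (Fw z d P) <-> (d = 0 \/ v z + d < size w) /\ Q (v z + d).
Proof.
elim: d => [|d IH] v z /=.
  by rewrite HP addn0; split=> [H|[]]; [split=> //; left|].
split.
  move=> [j [Hj [Hs H]]]; rewrite upd_same upd_other in Hs; subst j.
  move/IH: H; rewrite upd_same => [[H1 H2]]; split; first by right; lia.
  by rewrite -addSnnS.
move=> [H1 H2]; exists (v z).+1; split; first lia.
rewrite upd_same upd_other; split=> //; apply/IH; rewrite upd_same addSnnS; split=> //; lia.
Qed.

Lemma Bk_spec d : forall v z, sat w v (Bk z d P) <->
  d <= v z /\ (d = 0 \/ v z <= size w) /\ Q (v z - d).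
Proof.
elim: d => [|d IH] v z /=.
  by rewrite HP subn0; split=> [H|[_ []]] //; split=> //; split=> //; left.
split.
  move=> [j [Hj [Hs H]]]; rewrite upd_same upd_other in Hs.
  move/IH: H; rewrite upd_same => [[H1 [H2 H3]]]; split; first lia.
  split; first by right; lia.
  by rewrite Hs subSS.
move=> [H1 [[H2|H2] H3]] //; exists (v z).-1; split; first lia.
rewrite upd_same upd_other; split; first lia.
apply/IH; rewrite upd_same; split; first lia; split; first lia.
by have -> : (v z).-1 - d = v z - d.+1 by lia.
Qed.
End Spec.

Lemma Let_spec w a : forall v y, sat w v ((fun y => FLetter a y : fo) y) <->
  (fun p => onth w p = Some a) (v y).
Proof. by []. Qed.
Lemma True_spec w : forall v (y : var), sat w v ((fun _ => FTrue : fo) y) <-> (fun _ => True) (v y).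
Proof. by []. Qed.

Definition Cond (c : option A) (k : nat) (z : var) : fo :=
  let P := match c with Some a => fun y => FLetter a y | None => fun _ => FTrue end in
  let f := if rr <= k then Fw z (k - rr) P else Bk z (rr - k) P in
  match c with Some _ => f | None => FNot f end.

Lemma Cond_spec w v c k z : v z < size w -> k < rr + rr + 1 ->
  sat w v (Cond c k z) <-> nth None (VV w (v z)) k = c.
Proof.
move=> Hz Hk; rewrite nth_VV // /Cond.
case: c => [a|]; case: (leqP rr k) => Hr.
- rewrite (Fw_spec (Let_spec w a)) ifT; last lia.
  have -> : v z + (k - rr) = v z + k - rr by lia.
  split; first by case.
  move=> H; split=> //; right; have := onthTE w (v z + k - rr); rewrite H /=; lia.
- rewrite (Bk_spec (Let_spec w a)).
  case: ifP => H.
    have -> : v z - (rr - k) = v z + k - rr by lia.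
    by split; [case=> _ []|move=> ?; split; [lia|split; [right; lia|]]].
  by split=> // [[]]; lia.
- rewrite /= (Fw_spec (True_spec w)) ifT; last lia.
  have := onthNE w (v z + k - rr).
  case: (onth w (v z + k - rr)) => [x|] /= Hx; split=> //.
  + by move=> H; exfalso; apply: H; split=> //; right; lia.
  + by move=> _ [[H|H] _]; lia.
- rewrite /= (Bk_spec (True_spec w)).
  case: ifP => H.
    have := onthNE w (v z + k - rr).
    case: (onth w (v z + k - rr)) => [x|] /= Hx; split=> //.
    + by move=> H'; exfalso; apply: H'; split; [lia|split; [right; lia|]].
    + by move=> _; lia.
  by split=> // _ [H' _]; lia.
Qed.

Definition BigAnd (fs : seq fo) : fo := foldr (@FAnd A) FTrue fs.
Definition FOr (p q : fo) : fo := FNot (FAnd (FNot p) (FNot q)).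
Definition BigOr (fs : seq fo) : fo := foldr FOr (FNot FTrue) fs.

Lemma BigAnd_spec (T : eqType) (g : T -> fo) s w v :
  sat w v (BigAnd (map g s)) <-> forall x, x \in s -> sat w v (g x).
Proof.
elim: s => [|x s IH] /=; first by split.
rewrite IH; split=> [[H1 H2] y|H]; first by rewrite inE => /predU1P [->|/H2].
by split=> [|y Hy]; apply: H; rewrite inE ?eqxx ?Hy ?orbT.
Qed.

Lemma FOr_spec w v p q : sat w v (FOr p q) <-> sat w v p \/ sat w v q.
Proof.
rewrite /=; split; last by move=> [H|H] [H1 H2].
move=> H; case: (classic (sat w v p)) => Hp; first by left.
case: (classic (sat w v q)) => Hq; first by right.
by exfalso; apply: H.
Qed.

Lemma BigOr_spec (T : eqType) (g : T -> fo) s w v :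
  sat w v (BigOr (map g s)) <-> exists x, x \in s /\ sat w v (g x).
Proof.
elim: s => [|x s IH].
  by rewrite /=; split=> [H|[x []]]; [exfalso; apply: H|].
change (sat w v (FOr (g x) (BigOr (map g s))) <-> exists y, y \in x :: s /\ sat w v (g y)).
rewrite FOr_spec IH; split.
  by move=> [H|[y [Hy H]]]; [exists x; rewrite inE eqxx|exists y; rewrite inE Hy orbT].
move=> [y []]; rewrite inE => /predU1P [->|Hy] H; [by left|by right; exists y].
Qed.

Definition InF (z : var) : fo := FExists (~~ z) (FEq A (~~ z) z).
Lemma InF_spec w v z : sat w v (InF z) <-> v z < size w.
Proof.
rewrite /= ; split=> [[j [Hj]]|H]; first by rewrite upd_same upd_other => <-.
by exists (v z); rewrite upd_same upd_other.
Qed.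

Definition VF (c : seq (option A)) (z : var) : fo :=
  FAnd (InF z) (BigAnd (map (fun k => Cond (nth None c k) k z) (iota 0 (rr + rr + 1)))).

Lemma VF_spec w v c z : size c = rr + rr + 1 ->
  sat w v (VF c z) <-> v z < size w /\ VV w (v z) = c.
Proof.
move=> Hc; rewrite /VF; change (sat w v (InF z) /\ sat w v (BigAnd (map (fun k => Cond (nth None c k) k z) (iota 0 (rr + rr + 1)))) <-> v z < size w /\ VV w (v z) = c); rewrite InF_spec BigAnd_spec; split.
  move=> [Hz H]; split=> //; apply: (eq_from_nth (x0 := None)); first by rewrite size_VV.
  move=> k; rewrite size_VV => Hk; apply/(Cond_spec _ Hz Hk)/H.
  by rewrite mem_iota.
move=> [Hz <-]; split=> // k; rewrite mem_iota => /andP[_ Hk].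
by apply/(Cond_spec _ Hz).
Qed.

Fixpoint allw (T : finType) n : seq (seq T) :=
  if n is n'.+1 then flatten (map (fun x => map (cons x) (allw T n')) (enum T)) else [:: [::]].

Lemma allwP (T : finType) n (s : seq T) : (s \in allw T n) = (size s == n).
Proof.
elim: n s => [|n IH] s; first by case: s.
case: s => [|x s].
  by apply/negP => /flatten_mapP [y _] /mapP [t _].
apply/flatten_mapP/idP.
  by move=> [y _] /mapP [t Ht [-> ->]]; rewrite eqSS -IH.
rewrite eqSS -IH => H; exists x; first by rewrite mem_enum.
by apply/mapP; exists s.
Qed.

Definition LocF (b : B) (z : var) : fo :=
  BigOr (map (fun c => FAnd (VF c z) (if pb (FF c = b) then FTrue else FNot FTrue))
             (allw (option A) (rr + rr + 1))).

Lemma LocF_spec w v b z : sat w v (LocF b z) <-> v z < size w /\ FF (VV w (v z)) = b.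
Proof.
rewrite BigOr_spec; split.
  move=> [c [Hc [H1 H2]]]; move: Hc; rewrite allwP => /eqP Hc.
  move/(VF_spec _ _ _ Hc): H1 => [Hz HV]; split=> //; rewrite HV.
  by move: H2; case: ifP => [/pbE|] //.
move=> [Hz Hb]; exists (VV w (v z)); split; first by rewrite allwP size_VV.
split; first by apply/VF_spec; rewrite ?size_VV.
by rewrite ifT //; apply/pbE.
Qed.

Lemma onth_lt (T : Type) (x0 : T) s t : t < size s -> onth s t = Some (nth x0 s t).
Proof. by elim: s t => [|x s IH] [|t] //= H; apply: IH. Qed.

Lemma bool_ne (x z : bool) : x != ~~ z -> x \in [:: z].
Proof. by case: x; case: z. Qed.

Lemma fv_Fw (P : var -> fo) (HP : forall y, {subset fv (P y) <= [:: y]}) d z :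
  {subset fv (Fw z d P) <= [:: z]}.
Proof.
case: d => [|d]; first exact: HP.
move=> x; change (x \in filter (fun y => y != ~~ z) (fv (FAnd (FSucc A z (~~ z)) (Fw (~~ z) d P))) -> x \in [:: z]).
by rewrite mem_filter => /andP[/bool_ne].
Qed.
Lemma fv_Bk (P : var -> fo) (HP : forall y, {subset fv (P y) <= [:: y]}) d z :
  {subset fv (Bk z d P) <= [:: z]}.
Proof.
case: d => [|d]; first exact: HP.
move=> x; change (x \in filter (fun y => y != ~~ z) (fv (FAnd (FSucc A (~~ z) z) (Bk (~~ z) d P))) -> x \in [:: z]).
by rewrite mem_filter => /andP[/bool_ne].
Qed.

Lemma fv_Cond c k z : {subset fv (Cond c k z) <= [:: z]}.
Proof.
have H1 : forall a y, {subset fv ((fun y => FLetter a y : fo) y) <= [:: y]} by move=> a y x; rewrite /= inE.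
have H2 : forall y, {subset fv ((fun _ => FTrue : fo) y) <= [:: y]} by [].
rewrite /Cond; case: c => [a|]; case: ifP => _.
- exact: (fv_Fw (H1 a)).
- exact: (fv_Bk (H1 a)).
- exact: (fv_Fw H2).
- exact: (fv_Bk H2).
Qed.

Lemma fv_BigAnd (T : Type) (g : T -> fo) s (S : seq var) :
  (forall x, {subset fv (g x) <= S}) -> {subset fv (BigAnd (map g s)) <= S}.
Proof.
move=> H; elim: s => [|x s IH] //= y; rewrite mem_cat => /orP[]; [exact: H|exact: IH].
Qed.
Lemma fv_BigOr (T : Type) (g : T -> fo) s (S : seq var) :
  (forall x, {subset fv (g x) <= S}) -> {subset fv (BigOr (map g s)) <= S}.
Proof.
move=> H; elim: s => [|x s IH] //= y; rewrite mem_cat => /orP[]; [exact: H|exact: IH].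
Qed.

Lemma fv_InF z : {subset fv (InF z) <= [:: z]}.
Proof.
move=> x; change (x \in filter (fun y => y != ~~ z) (fv (FEq A (~~ z) z)) -> x \in [:: z]).
by rewrite mem_filter => /andP[/bool_ne].
Qed.

Lemma fv_VF c z : {subset fv (VF c z) <= [:: z]}.
Proof.
move=> x; change (x \in fv (InF z) ++ fv (BigAnd (map (fun k => Cond (nth None c k) k z) (iota 0 (rr + rr + 1)))) -> x \in [:: z]).
rewrite mem_cat => /orP[/fv_InF //|].
by apply: fv_BigAnd => k; apply: fv_Cond.
Qed.

Lemma fv_LocF b z : {subset fv (LocF b z) <= [:: z]}.
Proof.
apply: fv_BigOr => c y.
change (y \in fv (VF c z) ++ fv (if pb (FF c = b) then (FTrue : fo) else FNot FTrue) -> y \in [:: z]).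
rewrite mem_cat => /orP[/fv_VF //|].
by case: ifP.
Qed.

Fixpoint tr (phi : fo2 B) : fo :=
  match phi with
  | FTrue => FTrue
  | FLetter b x => LocF b x
  | FEq x y => FEq A x y
  | FLt x y => FLt A x y
  | FSucc x y => FSucc A x y
  | FNot p => FNot (tr p)
  | FAnd p q => FAnd (tr p) (tr q)
  | FExists x p => FExists x (tr p)
  end.

Lemma fv_tr phi : {subset fv (tr phi) <= fv phi}.
Proof.
elim: phi => [|b x|x y|x y|x y|p IH|p IHp q IHq|x p IH].
- by [].
- exact: fv_LocF.
- by [].
- by [].
- by [].
- exact: IH.
- by move=> y; rewrite /= !mem_cat => /orP[/IHp|/IHq] ->; rewrite ?orbT.
- by move=> y; rewrite /= !mem_filter => /andP[-> /IH].
Qed.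

Lemma tr_spec w : KK <= size w -> forall phi v, sat (eta w) v phi <-> sat w v (tr phi).
Proof.
move=> Hl; elim=> //=.
- by move=> b x v; rewrite LocF_spec onth_eta.
- by move=> p IH v; rewrite IH.
- by move=> p IHp q IHq v; rewrite IHp IHq.
- move=> x p IH v; rewrite size_eta //; split=> [[i [Hi H]]|[i [Hi H]]];
    exists i; split=> //; apply/IH=> //.
Qed.

Definition ExactF (u : seq A) : fo :=
  match u with
  | [::] => FNot (FExists false FTrue)
  | a :: _ => FExists false (FAnd (FNot (FExists true (FSucc A true false)))
      (FAnd (BigAnd (map (fun t => Fw false t (fun y => FLetter (nth a u t) y)) (iota 0 (size u))))
            (FNot (Fw false (size u) (fun _ => FTrue)))))
  end.

Lemma ExactF_spec w v u : sat w v (ExactF u) <-> w = u.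
Proof.
case: u => [|a u'].
  rewrite /=; split; last by move=> -> [i []].
  by case: w => // x w H; exfalso; apply: H; exists 0.
set u := a :: u'.
change ((exists x, x < size w /\
   (~ sat w (upd v false x) (FExists true (FSucc A true false)) /\
    (sat w (upd v false x) (BigAnd (map (fun t => Fw false t (fun y => FLetter (nth a u t) y)) (iota 0 (size u)))) /\
     ~ sat w (upd v false x) (Fw false (size u) (fun _ => FTrue))))) <-> w = u).
have Hf : forall x, upd v false x false = x by move=> x; rewrite upd_same.
split.
  move=> [x [Hx [Hnp [Hlet Hend]]]].
  have Hx0 : x = 0.
    case: x Hx Hnp {Hlet Hend Hf} => // x Hx Hnp; exfalso; apply: Hnp.
    by exists x; split; [lia|rewrite /upd /=].
  subst x.
  move: Hend; rewrite (Fw_spec (True_spec w)) Hf add0n => Hend.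
  have Hsz : size w <= size u by case: (leqP (size w) (size u)) => // H; exfalso; apply: Hend; split=> //; right.
  move/BigAnd_spec: Hlet => Hlet.
  have Ht : forall t, t < size u -> onth w t = Some (nth a u t).
    move=> t Ht; have := Hlet t; rewrite mem_iota /= => /(_ Ht).
    by rewrite (Fw_spec (Let_spec w _)) Hf add0n => [[]].
  apply: eq_from_onth => t; case: (ltnP t (size u)) => H.
    by rewrite Ht // (onth_lt a).
  by rewrite !onth_default //; lia.
move=> Hw; exists 0; rewrite Hw; split=> //; split.
  by move=> [j [_]]; rewrite /upd /=.
split.
  apply/BigAnd_spec => t; rewrite mem_iota /= => Ht.
  by rewrite (Fw_spec (Let_spec _ _)) Hf add0n; split; [right|apply: onth_lt].
by rewrite (Fw_spec (True_spec _)) Hf add0n => [[[]]] //; lia.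
Qed.

Lemma fv_ex0 (f : fo) : {subset fv f <= [:: false]} -> {subset fv (FExists false f) <= [::]}.
Proof. move=> H x; rewrite /= mem_filter => /andP[Hx /H]; rewrite inE => /eqP Hxf; by rewrite Hxf in Hx. Qed.

Lemma fv_And (p q : fo) (S : seq var) : {subset fv p <= S} -> {subset fv q <= S} -> {subset fv (FAnd p q) <= S}.
Proof. by move=> Hp Hq x; rewrite /= mem_cat => /orP[/Hp|/Hq]. Qed.

Lemma fv_ExactF u : {subset fv (ExactF u) <= [::]}.
Proof.
case: u => [|a u] //; apply: fv_ex0; apply: fv_And; last apply: fv_And.
- by case=> //.
- by apply: fv_BigAnd => t; apply: fv_Fw => y z Hz.
- move=> x; change (x \in fv (Fw false (size (a :: u)) (fun=> FTrue)) -> x \in [:: false]).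
  by apply: (fv_Fw (P := fun _ => FTrue)) => y z.
Qed.

Definition LongF : fo := FExists false (Fw false KK.-1 (fun _ => FTrue)).

Lemma LongF_spec w v : sat w v LongF <-> KK <= size w.
Proof.
have Hk := KK_gt1.
change ((exists i, i < size w /\ sat w (upd v false i) (Fw false KK.-1 (fun _ => FTrue))) <-> KK <= size w).
split.
  by move=> [i [Hi]]; rewrite (Fw_spec (True_spec w)) upd_same => [[[H|H] _]]; lia.
move=> H; exists 0; split; first lia.
by rewrite (Fw_spec (True_spec w)) upd_same; split=> //; right; lia.
Qed.

Lemma fv_LongF : {subset fv LongF <= [::]}.
Proof. by apply: fv_ex0; apply: (fv_Fw (P := fun _ => FTrue)) => y z. Qed.

Definition shortw := flatten (map (allw A) (iota 0 KK)).
Lemma shortwP u : (u \in shortw) = (size u < KK).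
Proof.
apply/flatten_mapP/idP.
  by move=> [m]; rewrite mem_iota allwP => /andP[_ H] /eqP ->.
by move=> H; exists (size u); rewrite ?mem_iota ?allwP //.
Qed.

Definition ShortF (K : seq B -> Prop) : fo :=
  BigOr (map (fun u => if pb (K (eta u)) then ExactF u else FNot FTrue) shortw).

Lemma ShortF_spec K w v : sat w v (ShortF K) <-> size w < KK /\ K (eta w).
Proof.
rewrite BigOr_spec; split.
  move=> [u [Hu]]; case E: (pb (K (eta u))); last by move=> /= H; exfalso; apply: H.
  move/ExactF_spec => Hw; subst u; split; first by rewrite -shortwP.
  by apply/pbE; rewrite E.
move=> [Hs HK]; exists w; split; first by rewrite shortwP.
by rewrite ifT ?ExactF_spec //; apply/pbE.
Qed.

Lemma fv_ShortF K : {subset fv (ShortF K) <= [::]}.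
Proof. by apply: fv_BigOr => u; case: ifP => _; [apply: fv_ExactF|]. Qed.

Lemma nil_subset (s : seq var) : {subset s <= [::]} -> s = [::].
Proof. by case: s => // x s H; have := H x (mem_head _ _). Qed.

Lemma FAnd_spec w v (p q : fo) : sat w v (FAnd p q) <-> sat w v p /\ sat w v q.
Proof. by []. Qed.

Lemma main_sec : exists eta : seq A -> seq B,
    (forall w, well_formed one (eta w) /\ alpha w = beta one (eta w)) /\
    (forall K : seq B -> Prop,
        FO2_lt_definable K -> FO2_lt_succ_definable (fun w => K (eta w))).
Proof.
exists eta; split; first by move=> w; split; [apply: wf_eta|rewrite beta_eta].
move=> K [phi [Hs [_ HK]]].
exists (FOr (FAnd LongF (tr phi)) (ShortF K)); split.
  apply: nil_subset => x; change (x \in (fv LongF ++ fv (tr phi)) ++ fv (ShortF K) -> x \in [::]).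
  rewrite mem_cat => /orP[H|/fv_ShortF //]; move: H; rewrite mem_cat => /orP[/fv_LongF|/fv_tr] //.
  by rewrite Hs.
move=> w; rewrite /lang FOr_spec (FAnd_spec w _ LongF) LongF_spec ShortF_spec HK /lang.
case: (leqP KK (size w)) => H.
  rewrite (tr_spec H); split; [by left|by case=> [[]|[]]].
by split; [right|case=> [[]|[]] //; lia].
Qed.
End Main.

Theorem lemma3 (A M : finType) (mul : M -> M -> M) (one : M)
  (mulA : associative mul) (mul1m : left_id one mul) (mulm1 : right_id one mul)
  (alpha : seq A -> M)
  (alpha_nil : alpha [::] = one)
  (alpha_cat : forall u v, alpha (u ++ v) = mul (alpha u) (alpha v)) :
  exists eta : seq A -> seq (Bty mul alpha),
    (forall w, well_formed one (eta w) /\ alpha w = beta one (eta w)) /\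
    (forall K : seq (Bty mul alpha) -> Prop,
        FO2_lt_definable K -> FO2_lt_succ_definable (fun w => K (eta w))).
Proof. exact: main_sec. Qed.
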